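(* Let $E$ be a real vector space, $M$ a linear subspace of $E$, $S$ a sublinear functional on $E$ and $P$ a superlinear functional on $E$. Let $x_0\in E\setminus M$ and let $M_1$ be the smallest linear subspace of $E$ containing $M$ and $x_0$. Let $f_0$ be a linear functional on $M$ such that $f_0(x)\le S(x+y)-P(y)$ for every $x\in M$ and every $y\in M_1$. Then there exists a linear functional $L$ on $M_1$ such that $L(x)=f_0(x)$ for all $x\in M$ and $P(x)\le L(x)\le S(x)$ for every $x\in M_1$.
   Context: A functional $S:E\to\mathbb{R}$ is sublinear if $S(x+y)\le S(x)+S(y)$ for all $x,y\in E$ and $S(\alpha x)=\alpha S(x)$ for all $x\in E$, $\alpha>0$. A functional $P:E\to\mathbb{R}$ is superlinear if $P(x+y)\ge P(x)+P(y)$ and $P(\alpha x)=\alpha P(x)$ for all $x,y\in E$, $\alpha>0$. *)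

(* Defs.v *)
From mathcomp Require Import all_boot all_order all_algebra.
From mathcomp Require Import reals.
Set Implicit Arguments. Unset Strict Implicit. Unset Printing Implicit Defensive.
Import Order.TTheory GRing.Theory Num.Theory.
Local Open Scope ring_scope.

Section Defs.
Variables (R : realType) (E : lmodType R).

Definition subspace (N : E -> Prop) : Prop :=
  N 0 /\ forall (a : R) (x y : E), N x -> N y -> N (a *: x + y).

Definition span_with (M : E -> Prop) (x0 : E) : E -> Prop :=
  fun x => forall N : E -> Prop, subspace N -> (forall m, M m -> N m) -> N x0 -> N x.

(* f is a linear functional on the subspace N (values outside N irrelevant). *)
Definition linear_on (N : E -> Prop) (f : E -> R) : Prop :=
  forall (a : R) (x y : E), N x -> N y -> f (a *: x + y) = a * f x + f y.

Definition sublinear (S : E -> R) : Prop :=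
  (forall x y, S (x + y) <= S x + S y) /\
  (forall (a : R) x, 0 < a -> S (a *: x) = a * S x).

Definition superlinear (P : E -> R) : Prop :=
  (forall x y, P (x + y) >= P x + P y) /\
  (forall (a : R) x, 0 < a -> P (a *: x) = a * P x).
End Defs.

(* Main.v *)
Require Import Defs.
From mathcomp Require Import all_boot all_order all_algebra.
From mathcomp Require Import reals.
From mathcomp Require Import boolp classical_sets.
From mathcomp Require Import ring lra.
Import Order.TTheory GRing.Theory Num.Theory.
Local Open Scope ring_scope.

Theorem lemma4p5 (R : realType) (E : lmodType R) (M : E -> Prop)
  (S P : E -> R) (x0 : E) (f0 : E -> R) :
  subspace M -> sublinear S -> superlinear P ->
  ~ M x0 ->
  linear_on M f0 ->
  (forall x y, M x -> span_with M x0 y -> f0 x <= S (x + y) - P y) ->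
  exists L : E -> R,
    linear_on (span_with M x0) L /\
    (forall x, M x -> L x = f0 x) /\
    (forall x, span_with M x0 x -> P x <= L x <= S x).
Proof.
move=> [M0 Mc] [Sadd Shom] [Padd Phom] nx0 lf0 H.
have two0 : (0 < 2 :> R) by [].
have S0 : S 0 = 0.
  by have := Shom 2 0 two0; rewrite scaler0 => e; lra.
have P0 : P 0 = 0.
  by have := Phom 2 0 two0; rewrite scaler0 => e; lra.
have f00 : f0 0 = 0.
  by have := lf0 1 0 0 M0 M0; rewrite scale1r addr0 mul1r => e; lra.
have MZ a m : M m -> M (a *: m).
  by move=> Mm; have := Mc a m 0 Mm M0; rewrite addr0.
have MD m m' : M m -> M m' -> M (m + m').
  by move=> Mm Mm'; have := Mc 1 m m' Mm Mm'; rewrite scale1r.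
have MN m : M m -> M (- m).
  by move=> Mm; rewrite -scaleN1r; apply: MZ.
have MB m m' : M m -> M m' -> M (m - m').
  by move=> Mm Mm'; apply: MD => //; apply: MN.
have f0Z a m : M m -> f0 (a *: m) = a * f0 m.
  by move=> Mm; have := lf0 a m 0 Mm M0; rewrite !addr0 f00 addr0.
have f0D m m' : M m -> M m' -> f0 (m + m') = f0 m + f0 m'.
  by move=> Mm Mm'; have := lf0 1 m m' Mm Mm'; rewrite scale1r mul1r.
have f0N m : M m -> f0 (- m) = - f0 m.
  by move=> Mm; rewrite -scaleN1r f0Z // mulN1r.
have f0B m m' : M m -> M m' -> f0 (m - m') = f0 m - f0 m'.
  by move=> Mm Mm'; rewrite f0D ?f0N //; apply: MN.
have comb a m1 t1 m2 t2 : a *: (m1 + t1 *: x0) + (m2 + t2 *: x0)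
    = (a *: m1 + m2) + (a * t1 + t2) *: x0.
  by rewrite scalerDr scalerDl scalerA -!addrA; congr (_ + _); rewrite addrCA.
have spanE z : span_with M x0 z <-> exists m t, M m /\ z = m + t *: x0.
  split.
    move=> Hz; apply: (Hz (fun z => exists m t, M m /\ z = m + t *: x0)).
    - split; first by exists 0, 0; rewrite scale0r addr0.
      move=> a x y [m1 [t1 [M1 ->]]] [m2 [t2 [M2 ->]]].
      exists (a *: m1 + m2), (a * t1 + t2); split; last exact: comb.
      by apply: MD => //; apply: MZ.
    - by move=> m Mm; exists m, 0; rewrite scale0r addr0.
    - by exists 0, 1; rewrite add0r scale1r.
  move=> [m [t [Mm ->]]] N [N0 Nc] NM Nx0.
  by have := Nc t x0 m Nx0 (NM m Mm); rewrite addrC.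
have spP m : M m -> span_with M x0 (m + x0).
  by move=> Mm; apply/spanE; exists m, 1; rewrite scale1r.
have spM m : M m -> span_with M x0 (m - x0).
  by move=> Mm; apply/spanE; exists m, (-1); rewrite scaleN1r.
have uniq m t m' t' : M m -> M m' -> m + t *: x0 = m' + t' *: x0 ->
    m = m' /\ t = t'.
  move=> Mm Mm' e.
  case: (t =P t') => [et|ne].
    by split => //; move: e; rewrite et => /addIr.
  exfalso; apply: nx0.
  have e2 : (t - t') *: x0 = m' - m.
    by rewrite scalerBl; apply: (addrI m); rewrite addrA e addrK addrC subrK.
  have -> : x0 = (t - t')^-1 *: (m' - m).
    by rewrite -e2 scalerA mulVf ?scale1r // subr_eq0; apply/eqP.
  by apply: MZ; apply: MB.
have Pf0 m : M m -> P m <= f0 m.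
  move=> Mm; have := H (- m) m (MN _ Mm) (proj2 (spanE m) (ex_intro _ m (ex_intro _ 0 (conj Mm (esym (eq_trans (congr1 _ (scale0r x0)) (addr0 m))))))).
  by rewrite addNr S0 f0N // => h; lra.
have f0S m : M m -> f0 m <= S m.
  move=> Mm; have := H m 0 Mm (proj2 (spanE 0) (ex_intro _ 0 (ex_intro _ 0 (conj M0 (esym (eq_trans (congr1 _ (scale0r x0)) (addr0 0))))))).
  by rewrite addr0 P0 subr0.
pose A : set R := fun r => exists m, M m /\
  (r = P (m + x0) - f0 m \/ r = f0 m - S (m - x0)).
have Abnd r : A r -> forall m', M m' ->
    r <= S (m' + x0) - f0 m' /\ r <= f0 m' - P (m' - x0).
  move=> [m [Mm [->|->]]] m' Mm'.
    split.
      have := H (m' - m) (m + x0) (MB _ _ Mm' Mm) (spP _ Mm).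
      by rewrite addrA subrK f0B // => h; lra.
    have := Padd (m + x0) (m' - x0).
    rewrite addrACA subrr addr0 => h.
    have := Pf0 _ (MD _ _ Mm Mm'); rewrite f0D // => h2; lra.
  split.
    have := Sadd (m - x0) (m' + x0).
    rewrite addrACA addNr addr0 => h.
    have := f0S _ (MD _ _ Mm Mm'); rewrite f0D // => h2; lra.
  have := H (m - m') (m' - x0) (MB _ _ Mm Mm') (spM _ Mm').
  by rewrite addrA subrK f0B // => h; lra.
have hs : has_sup A.
  split; first by exists (P (0 + x0) - f0 0), 0; split => //; left.
  exists (S (0 + x0) - f0 0) => r Ar; exact: (Abnd r Ar 0 M0).1.
pose c := sup A.
have cge m : M m -> P (m + x0) - f0 m <= c /\ f0 m - S (m - x0) <= c.
  move=> Mm; split; apply: sup_upper_bound => //; exists m; split => //.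
    by left. by right.
have cle m : M m -> c <= S (m + x0) - f0 m /\ c <= f0 m - P (m - x0).
  move=> Mm; split; apply: ge_sup; (try by case: hs) => r Ar;
    by have := Abnd r Ar m Mm; case.
pose L := fun z => match pselect (exists p : E * R, M p.1 /\ z = p.1 + p.2 *: x0) with
  | left h => let p := projT1 (cid h) in f0 p.1 + p.2 * c
  | right _ => 0 end.
have LE m t : M m -> L (m + t *: x0) = f0 m + t * c.
  move=> Mm; rewrite /L; case: pselect => [h|nh]; last first.
    by exfalso; apply: nh; exists (m, t).
  case: (cid h) => [[m1 t1] /= [M1 e]].
  by have [-> ->] := uniq m t m1 t1 Mm M1 e.
exists L; split.
  move=> a x y /spanE [m1 [t1 [M1 ->]]] /spanE [m2 [t2 [M2 ->]]].
  rewrite comb !LE //; last by apply: MD => //; apply: MZ.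
  rewrite f0D ?f0Z //; last by apply: MZ.
  by ring.
split.
  by move=> x Mx; have := LE x 0 Mx; rewrite scale0r !addr0 mul0r addr0.
move=> z /spanE [m [t [Mm ->]]]; rewrite LE //.
case: (ltrgtP t 0) => [tn|tp|->].
- pose s := - t.
  have sp : 0 < s by rewrite /s oppr_gt0.
  have et : t = - s by rewrite /s opprK.
  clearbody s.
  have Mm' : M (s^-1 *: m) by apply: MZ.
  have e : m + t *: x0 = s *: (s^-1 *: m - x0).
    by rewrite scalerBr scalerA mulfV ?gt_eqF // scale1r et scaleNr.
  have fm : f0 m = s * f0 (s^-1 *: m).
    by rewrite f0Z // mulrA mulfV ?gt_eqF // mul1r.
  rewrite e Phom // Shom // fm et.
  have [c1 c2] := cge _ Mm'; have [c3 c4] := cle _ Mm'.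
  have h1 : s * P (s^-1 *: m - x0) <= s * (f0 (s^-1 *: m) - c).
    by rewrite ler_pM2l //; lra.
  have h2 : s * (f0 (s^-1 *: m) - c) <= s * S (s^-1 *: m - x0).
    by rewrite ler_pM2l //; lra.
  rewrite mulrBr in h1 h2; rewrite mulNr.
  apply/andP; split; lra.
- have Mm' : M (t^-1 *: m) by apply: MZ.
  have e : m + t *: x0 = t *: (t^-1 *: m + x0).
    by rewrite scalerDr scalerA mulfV ?gt_eqF // scale1r.
  have fm : f0 m = t * f0 (t^-1 *: m).
    by rewrite f0Z // mulrA mulfV ?gt_eqF // mul1r.
  rewrite e Phom // Shom // fm -mulrDr !ler_pM2l //.
  have [c1 c2] := cge _ Mm'; have [c3 c4] := cle _ Mm'.
  apply/andP; split; lra.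
- rewrite scale0r addr0 mul0r addr0; apply/andP; split; [exact: Pf0|exact: f0S].
Qed.
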